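(* Let $q$ be a power of the odd prime $p$ and let $f$ be a Dembowski–Ostrom polynomial over $\mathbb F_{q^2}$ defining a planar function. Put $x*y:=\frac12(f(x+y)-f(x)-f(y))$. For $u,v,w\in\mathbb F_{q^2}$ define $\varsigma_{u,v,w}$ on the points of $\Pi(f)$ by $(x,y)\mapsto(x+u,\ y+2w*x-v)$, $(x)\mapsto(x+w-u)$ for $x\in\mathbb F_{q^2}$, and $(\infty)\mapsto(\infty)$. Then: (a) the maps $\varsigma_{u,v,w}$ form a collineation group $\Sigma$ of $\Pi(f)$ of order $q^6$, and $\varsigma_{u',v',w'}\circ\varsigma_{u,v,w}=\varsigma_{u+u',\,v+v'-2w'*u,\,w+w'}$ for all $u,v,w,u',v',w'\in\mathbb F_{q^2}$; (b) the shift group of $\Pi(f)$ equals $\{\varsigma_{u,v,0}:u,v\in\mathbb F_{q^2}\}$; (c) $\{\varsigma_{u,v,u}:u,v\in\mathbb F_{q^2}\}$ is the translation group of $\Pi(f)$; (d) $\{\varsigma_{0,0,w}:w\in\mathbb F_{q^2}\}$ is the group of elations of $\Pi(f)$ with axis $N_0$ and center $(\infty)$.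
   Context: A Dembowski–Ostrom polynomial over $\mathbb F_{q^2}$ is one of the form $\sum_{i,j}a_{ij}x^{p^i+p^j}$ with $a_{ij}\in\mathbb F_{q^2}$; planar means $x\mapsto f(x+a)-f(x)$ is bijective for each $a\neq0$. $\Pi(f)$ is the projective plane with points $(x,y)\in\mathbb F_{q^2}^2$ and $(a)$ for $a\in\mathbb F_{q^2}\cup\{\infty\}$, lines $L_{a,b}=\{(x,f(x+a)-b):x\in\mathbb F_{q^2}\}\cup\{(a)\}$, $N_a=\{(a,y):y\in\mathbb F_{q^2}\}\cup\{(\infty)\}$ ($a,b\in\mathbb F_{q^2}$), $L_\infty=\{(a):a\in\mathbb F_{q^2}\cup\{\infty\}\}$. The shift group of $\Pi(f)$ is the group of collineations induced by $(x,y)\mapsto(x+u,y+v)$, $u,v\in\mathbb F_{q^2}$ (acting on $L_\infty$ as induced). The translation group is the group of all elations with axis $L_\infty$ (collineations fixing every point of $L_\infty$ and every line through some fixed point of $L_\infty$), including the identity. An elation with axis $\ell$ and center $P\in\ell$ is a collineation fixing every point of $\ell$ and every line through $P$. *)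

(* Defs.v *)
From HB Require Import structures.
From mathcomp Require Import all_boot all_order all_algebra all_fingroup.
From mathcomp Require Import all_field.
Set Implicit Arguments. Unset Strict Implicit. Unset Printing Implicit Defensive.
Import GRing.Theory.
Local Open Scope ring_scope.

(* Points of Pi(f): inl (x,y) is the affine point (x,y);
   inr (Some a) is the point (a) at infinity, inr None is (infinity). *)
Notation point F := ((F * F) + option F)%type.
(* Lines of Pi(f): inl (a,b) is L_{a,b}; inr (Some a) is N_a; inr None is L_infinity. *)
Notation line F := ((F * F) + option F)%type.

Section Plane.
Variable F : finFieldType.

Definition DO_poly (p : nat) (f : F -> F) : Prop :=
  exists (n : nat) (a : 'I_n -> 'I_n -> F),
    forall x, f x = \sum_(i < n) \sum_(j < n) a i j * x ^+ (p ^ i + p ^ j).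

Definition planar (f : F -> F) : Prop :=
  forall a : F, a != 0 -> bijective (fun x => f (x + a) - f x).

Definition inc (f : F -> F) (P : point F) (l : line F) : bool :=
  match l, P with
  | inl (a, b), inl (x, y) => y == f (x + a) - b
  | inl (a, _), inr (Some c) => c == a
  | inl _, inr None => false
  | inr (Some a), inl (x, _) => x == a
  | inr (Some _), inr (Some _) => false
  | inr (Some _), inr None => true
  | inr None, inl _ => false
  | inr None, inr _ => true
  end.

Definition L_inf : line F := inr None.
Definition N_ (a : F) : line F := inr (Some a).
Definition P_inf : point F := inr None.

Definition collineation (f : F -> F) (g : {perm point F}) : bool :=
  [forall l : line F, [exists l' : line F,
     [forall P : point F, inc f (g P) l' == inc f P l]]].

Definition fixes_line (f : F -> F) (g : {perm point F}) (l : line F) : bool :=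
  [forall P : point F, inc f (g P) l == inc f P l].

Definition elation (f : F -> F) (g : {perm point F}) (axis : line F) (center : point F) : bool :=
  [&& collineation f g, inc f center axis,
      [forall P : point F, inc f P axis ==> (g P == P)] &
      [forall l : line F, inc f center l ==> fixes_line f g l]].

Definition elation_group (f : F -> F) (axis : line F) (center : point F) : {set {perm point F}} :=
  [set g | elation f g axis center].

Definition translation_group (f : F -> F) : {set {perm point F}} :=
  [set g | [exists c : point F, elation f g L_inf c]].

Definition shift_group (f : F -> F) : {set {perm point F}} :=
  [set g | collineation f g &&
     [exists u : F, exists v : F, forall x : F, forall y : F,
        g (inl (x, y)) == inl (x + u, y + v)]].

Definition star (f : F -> F) (x y : F) : F := (f (x + y) - f x - f y) / 2.

Definition sigma (f : F -> F) (u v w : F) (P : point F) : point F :=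
  match P with
  | inl (x, y) => inl (x + u, y + 2 * star f w x - v)
  | inr (Some x) => inr (Some (x + w - u))
  | inr None => inr None
  end.

Definition is_sigma (f : F -> F) (g : {perm point F}) (u v w : F) : bool :=
  [forall P : point F, g P == sigma f u v w P].

End Plane.

(* Main.v *)
Require Import Defs.
From HB Require Import structures.
From mathcomp Require Import all_boot all_order all_algebra all_fingroup.
From mathcomp Require Import all_field.
From mathcomp Require Import ring.
Import GRing.Theory.
Local Open Scope ring_scope.

Section Alg.
Variables (F : finFieldType) (p : nat) (f : F -> F).
Hypotheses (Hp : p \in [pchar F]) (Hodd : odd p) (HDO : DO_poly p f).

Lemma two_neq0 : (2 : F) != 0.
Proof.
apply/negP => /eqP h.
have := dvdn_pcharf Hp 2; rewrite h eqxx.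
rewrite dvdn_prime2 ?(pcharf_prime Hp) // => /eqP e.
by move: Hodd; rewrite e.
Qed.

Lemma frobD i (x y : F) : (x + y) ^+ (p ^ i) = x ^+ (p ^ i) + y ^+ (p ^ i).
Proof.
apply: exprDn_pchar.
by rewrite (eq_pnat _ (pcharf_eq Hp)) pnatX pnat_id ?(pcharf_prime Hp) ?orbT.
Qed.

Lemma f0 : f 0 = 0.
Proof.
case: HDO => n [a ->]; apply: big1 => i _; apply: big1 => j _.
have hp := prime_gt0 (pcharf_prime Hp).
rewrite expr0n; case: eqP => [e|]; last by rewrite mulr0.
by move: e; move/eqP; rewrite addn_eq0 expn_eq0 eqn0Ngt hp.
Qed.

Lemma f_quad x y z :
  f (x + y + z) + f x + f y + f z = f (x + y) + f (x + z) + f (y + z).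
Proof.
case: HDO => n [a Ha]; rewrite !Ha.
rewrite -!big_split /=; apply: eq_bigr => i _.
rewrite -!big_split /=; apply: eq_bigr => j _.
rewrite !exprD !frobD.
ring.
Qed.

End Alg.

Section Geo.
Variables (F : finFieldType) (f : F -> F).
Hypotheses (H2 : (2 : F) != 0) (Hf0 : f 0 = 0)
  (Hq : forall x y z, f (x + y + z) + f x + f y + f z = f (x + y) + f (x + z) + f (y + z))
  (Hpl : planar f).

Local Notation star := (star f).

Lemma fD x y : f (x + y) = f x + f y + 2 * star x y.
Proof. rewrite /Defs.star mulrC divfK //; ring. Qed.

Lemma starC x y : star x y = star y x.
Proof. rewrite /Defs.star (addrC x y); congr (_ / _); ring. Qed.

Lemma starDl x y z : star (x + y) z = star x z + star y z.
Proof.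
rewrite /Defs.star -mulrDl; congr (_ / _).
have e : f (x + y + z) = f (x + y) + f (x + z) + f (y + z) - f x - f y - f z.
  by rewrite -Hq; ring.
rewrite e; ring.
Qed.

Lemma starDr x y z : star z (x + y) = star z x + star z y.
Proof. by rewrite starC starDl !(starC z). Qed.

Lemma star0l z : star 0 z = 0.
Proof. by rewrite /Defs.star add0r Hf0 subr0 subrr mul0r. Qed.

Lemma star0r z : star z 0 = 0.
Proof. by rewrite starC star0l. Qed.

Lemma starNl x z : star (- x) z = - star x z.
Proof. by apply/eqP; rewrite -subr_eq0 opprK -starDl addNr star0l. Qed.

Lemma starNr x z : star z (- x) = - star z x.
Proof. by rewrite starC starNl starC. Qed.

Lemma nondeg d : (forall z, star z d = 0) -> d = 0.
Proof.
move=> H; apply/eqP; apply/negP => /negP dn0.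
have /bij_inj hi := Hpl d dn0.
have := hi 0 1; rewrite /= !(addrC _ d) !fD !(starC d) !H Hf0.
have -> : f d + 0 + 2 * 0 - 0 = f d + f 1 + 2 * 0 - f 1 by ring.
by move=> /(_ erefl) /eqP; rewrite eq_sym oner_eq0.
Qed.

Lemma surj d t : d != 0 -> exists z, star z d = t.
Proof.
move=> dn0; have [h' _ K] := Hpl d dn0.
exists (h' (f d + 2 * t)); have := K (f d + 2 * t).
rewrite /= fD; set z := h' _ => e.
apply: (mulfI H2); rewrite -[RHS](addKr (f d)) -e; ring.
Qed.

Lemma two_point x1 y1 x2 y2 : x1 != x2 ->
  exists a b, y1 = f (x1 + a) - b /\ y2 = f (x2 + a) - b.
Proof.
rewrite -subr_eq0 => dn0.
have [z hz] := @surj _ ((y1 - y2 - f (x1 - x2)) / 2) dn0.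
exists (z - x2), (f z - y2); split.
  have -> : x1 + (z - x2) = z + (x1 - x2) by ring.
  rewrite fD hz mulrC divfK //; ring.
have -> : x2 + (z - x2) = z by ring.
ring.
Qed.

Lemma sigma_comp u v w u' v' w' P :
  sigma f u' v' w' (sigma f u v w P)
  = sigma f (u + u') (v + v' - 2 * star w' u) (w + w') P.
Proof.
case: P => [[x y]|[x|]] //=; last by congr (inr (Some _)); ring.
congr (inl (_, _)); first ring.
rewrite starDl starDr; ring.
Qed.

Lemma sigma_id P : sigma f 0 0 0 P = P.
Proof.
case: P => [[x y]|[x|]] //=; first by rewrite star0l mulr0 !addr0 subr0.
by rewrite addr0 subr0.
Qed.

Lemma sigma_inj u v w : injective (sigma f u v w).
Proof.
apply: (can_inj (g := sigma f (-u) (-v - 2 * star w u) (-w))) => P.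
rewrite sigma_comp starNl.
have -> : v + (- v - 2 * star w u) - 2 * - star w u = 0 by ring.
by rewrite !subrr sigma_id.
Qed.


Definition mkS u v w : {perm point F} := perm (sigma_inj u v w).

Lemma mkSE u v w P : mkS u v w P = sigma f u v w P.
Proof. by rewrite permE. Qed.

Lemma is_sigmaP (g : {perm point F}) u v w :
  reflect (forall P, g P = sigma f u v w P) (is_sigma f g u v w).
Proof.
apply: (iffP forallP) => H P; first exact/eqP.
by apply/eqP.
Qed.

Lemma is_sigma_mkS (g : {perm point F}) u v w : is_sigma f g u v w -> g = mkS u v w.
Proof. by move/is_sigmaP => H; apply/permP => P; rewrite mkSE H. Qed.

Lemma mkS_is u v w : is_sigma f (mkS u v w) u v w.
Proof. by apply/is_sigmaP => P; rewrite mkSE. Qed.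

Lemma collP (g : {perm point F}) : collineation f g ->
  forall l, exists l', forall P, inc f (g P) l' = inc f P l.
Proof.
move=> /forallP H l; have /existsP [l' /forallP H'] := H l.
by exists l' => P; apply/eqP.
Qed.

Lemma coll_sigma (g : {perm point F}) u v w : (forall P, g P = sigma f u v w P) -> collineation f g.
Proof.
move=> Hg; apply/forallP => l; apply/existsP.
case: l => [[a b]|[a|]].
- exists (inl (a - u + w, b + v + f w + 2 * star a w)); apply/forallP => P.
  rewrite Hg; apply/eqP; case: P => [[x y]|[c|]] //=.
    have -> : x + u + (a - u + w) = (x + a) + w by ring.
    rewrite fD starDl (starC w x).
    have -> : f (x + a) + f w + 2 * (star x w + star a w)
       - (b + v + f w + 2 * star a w) = (f (x + a) - b) + (2 * star x w - v) by ring.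
    by rewrite -addrA (inj_eq (addIr _)).
  have -> : c + w - u = c + (w - u) by ring.
  have -> : a - u + w = a + (w - u) by ring.
  by rewrite (inj_eq (addIr _)).
- exists (inr (Some (a + u))); apply/forallP => P.
  rewrite Hg; apply/eqP; case: P => [[x y]|[c|]] //=.
  by rewrite (inj_eq (addIr _)).
- exists (inr None); apply/forallP => P.
  by rewrite Hg; apply/eqP; case: P => [[x y]|[c|]].
Qed.


Lemma const_diff d K : (forall z, f (z + d) - f z = K) -> d = 0.
Proof.
move=> H; apply: nondeg => z.
have h0 := H 0; have h1 := H z.
rewrite add0r Hf0 subr0 in h0.
rewrite fD h0 in h1.
apply: (mulfI H2); rewrite mulr0.
have -> : 2 * star z d = (f z + K + 2 * star z d - f z) - K by ring.
by rewrite h1 subrr.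
Qed.

Lemma line_img (g : {perm point F}) a b c : collineation f g ->
  (forall x y, exists x' y', g (inl (x, y)) = inl (x', y')) ->
  g (inr (Some a)) = inr (Some c) ->
  exists b', forall x y, inc f (g (inl (x, y))) (inl (c, b')) = (y == f (x + a) - b).
Proof.
move=> Hc Haff Hga; have [l' Hl] := collP g Hc (inl (a, b)).
case: l' Hl => [[a' b']|[d|]] Hl.
- have := Hl (inr (Some a)); rewrite Hga /= eqxx => /eqP ->.
  by exists b' => x y; apply: (Hl (inl (x, y))).
- by have := Hl (inr (Some a)); rewrite Hga /= eqxx.
- have [x' [y' E]] := Haff 0 (f (0 + a) - b).
  by have := Hl (inl (0, f (0 + a) - b)); rewrite E /= eqxx.
Qed.


Lemma partD : elation_group f (N_ 0) (P_inf F) = [set g | [exists w : F, is_sigma f g 0 0 w]].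
Proof.
apply/setP => g; rewrite !inE; apply/idP/idP.
- case/and4P => Hc _ /forallP Hax /forallP Hl.
  have Hfix0 y : g (inl (0, y)) = inl (0, y) by apply/eqP; have := Hax (inl (0, y)); rewrite /= eqxx.
  have Hinf : g (inr None) = inr None by apply/eqP; exact: (Hax (inr None)).
  have HN x P : inc f (g P) (N_ x) = inc f P (N_ x).
    by have /forallP /(_ P) /eqP := Hl (N_ x).
  have HLi P : inc f (g P) (L_inf F) = inc f P (L_inf F).
    by have /forallP /(_ P) /eqP := Hl (L_inf F).
  pose psi x y := if g (inl (x, y)) is inl (_, y') then y' else 0.
  have Hpsi x y : g (inl (x, y)) = inl (x, psi x y).
    have := HN x (inl (x, y)); rewrite /psi /= eqxx.
    case E: (g (inl (x, y))) => [[x' y']|[c|]] //=; first by move/eqP ->.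
    by move=> _; move: E; rewrite -Hinf => /perm_inj.
  pose pi a := if g (inr (Some a)) is inr (Some c) then c else 0.
  have Hpi a : g (inr (Some a)) = inr (Some (pi a)).
    have := HLi (inr (Some a)); rewrite /pi /=.
    case E: (g (inr (Some a))) => [[x' y']|[c|]] //= _.
    by move: E; rewrite -Hinf => /perm_inj.
  have Haff x y : exists x' y', g (inl (x, y)) = inl (x', y').
    by exists x, (psi x y).
  have key a x y : psi x y = y + 2 * star x (pi a - a).
    have [b' Hb] := line_img _ _ (f (x + a) - y) _ Hc Haff (Hpi a).
    have h1 := Hb x y; rewrite Hpsi /= in h1.
    have e : f (x + a) - (f (x + a) - y) = y by ring.
    rewrite e eqxx in h1.
    have h0 := Hb 0 (f (0 + a) - (f (x + a) - y)).
    rewrite Hfix0 /= eqxx !add0r in h0.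
    move/eqP: h1 => ->; move/eqP: h0 => h0.
    have -> : b' = f (pi a) - f a + (f (x + a) - y).
      have -> : b' = f (pi a) - (f (pi a) - b') by ring.
      by rewrite -h0; ring.
    rewrite !fD starDr starNr; ring.
  apply/existsP; exists (pi 0 - 0); apply/is_sigmaP => -[[x y]|[a|]] /=.
  + by rewrite Hpsi (key 0) !subr0 addr0 starC.
  + rewrite Hpi !subr0; congr (inr (Some _)).
    have : pi a - a - pi 0 = 0.
      apply: nondeg => z; apply: (mulfI H2).
      have e : 2 * star z (pi a - a) = 2 * star z (pi 0).
        by have := key a z 0; rewrite (key 0) subr0 => /(addrI _) <-.
      by rewrite mulr0 starDr starNr mulrDr mulrN e subrr.
    move=> e; apply/eqP; rewrite -subr_eq0.
    have -> : pi a - (a + pi 0) = pi a - a - pi 0 by ring.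
    by rewrite e.
  + by [].
- case/existsP => w /is_sigmaP H.
  apply/and4P; split => //; first exact: coll_sigma H.
  + apply/forallP => -[[x y]|[c|]] //=; rewrite H //=.
    by apply/implyP => /eqP ->; rewrite addr0 star0r mulr0 addr0 subr0.
  + apply/forallP => -[[a b]|[a|]] //=; apply/forallP => P; rewrite H;
      case: P => [[x y]|[c|]] //=; by rewrite addr0.
Qed.


Lemma partB : shift_group f = [set g | [exists u : F, exists v : F, is_sigma f g u v 0]].
Proof.
apply/setP => g; rewrite !inE; apply/idP/idP.
- case/andP => Hc /existsP [u /existsP [v /forallP Ha']].
  have Ha x y : g (inl (x, y)) = inl (x + u, y + v).
    by apply/eqP; have /forallP := Ha' x; apply.
  have Hinf s : exists s', g (inr s) = inr s'.
    case E: (g (inr s)) => [[x' y']|s']; last by exists s'.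
    have : g (inl (x' - u, y' - v)) = g (inr s) by rewrite Ha E !subrK.
    by move/perm_inj.
  have Hpt a : g (inr (Some a)) = inr (Some (a - u)).
    have [l' Hl] := collP g Hc (inl (a, 0)).
    case: l' Hl => [[a' b']|[d|]] Hl.
    + have [s' Es] := Hinf (Some a).
      have := Hl (inr (Some a)); rewrite Es /= eqxx.
      case: s' Es => [c|] Es //= /eqP ec; rewrite ec; congr (inr (Some _)).
      have : a' - (a - u) = 0.
        apply: (@const_diff _ (b' + v)) => z.
        have := Hl (inl (z - a, f (z - a + a) - 0)); rewrite Ha /= eqxx.
        have -> : z - a + u + a' = z + (a' - (a - u)) by ring.
        rewrite subrK subr0 => /eqP e.
        have e2 : f (z + (a' - (a - u))) = f z + v + b' by rewrite e subrK.
        rewrite e2; ring.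
      by move=> e; apply/eqP; rewrite -subr_eq0 e.
    + have := Hl (inl (- u, f (- u + a) - 0)); rewrite Ha /= eqxx addNr => /eqP d0.
      have := Hl (inl (1 - u, f (1 - u + a) - 0)); rewrite Ha /= eqxx subrK -d0.
      by rewrite oner_eq0.
    + by have := Hl (inl (0, f (0 + a) - 0)); rewrite Ha /= eqxx.
  have HN : g (inr None) = inr None.
    have [[c|] Es] := Hinf None => //.
    have : g (inr (Some (c + u))) = g (inr None) by rewrite Hpt Es addrK.
    by move/perm_inj.
  apply/existsP; exists u; apply/existsP; exists (- v); apply/is_sigmaP.
  case => [[x y]|[a|]] /=.
  + by rewrite Ha star0l mulr0 addr0 opprK.
  + by rewrite Hpt addr0.
  + exact: HN.
- case/existsP => u /existsP [v /is_sigmaP H].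
  rewrite (coll_sigma _ _ _ _ H) /=; apply/existsP; exists u; apply/existsP; exists (- v).
  apply/forallP => x; apply/forallP => y.
  by rewrite H /= star0l mulr0 addr0.
Qed.


Lemma partC : translation_group f = [set g | [exists u : F, exists v : F, is_sigma f g u v u]].
Proof.
apply/setP => g; rewrite !inE; apply/idP/idP.
- case/existsP => c /and4P [Hc Hcen /forallP Hax /forallP Hl].
  have Hfix s : g (inr s) = inr s by apply/eqP; exact: (Hax (inr s)).
  have Haff x y : exists x' y', g (inl (x, y)) = inl (x', y').
    case E: (g (inl (x, y))) => [[x' y']|s]; first by exists x', y'.
    by move: E; rewrite -Hfix => /perm_inj.
  have Hfl l : inc f c l -> forall P, inc f (g P) l = inc f P l.
    by move=> hl P; have := Hl l; rewrite hl => /forallP /(_ P) /eqP.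
  clear Hl; case: c Hcen Hfl => [[x0 y0]|[a0|]] // _ Hfl.
  +
    pose pi x := if g (inl (x, 0)) is inl (x', _) then x' else 0.
    pose psi x y := if g (inl (x, y)) is inl (_, y') then y' else 0.
    have Hg x y : g (inl (x, y)) = inl (pi x, psi x y).
      have [x1 [y1 E1]] := Haff x y; have [x2 [y2 E2]] := Haff x 0.
      rewrite /pi /psi E1 E2.
      have [l' Hl'] := collP g Hc (N_ x).
      case: l' Hl' => [[a' b']|[d|]] Hl'.
      * by have := Hl' (inr None); rewrite Hfix.
      * have h1 := Hl' (inl (x, y)); have h2 := Hl' (inl (x, 0)).
        rewrite /= eqxx E1 /= in h1; rewrite /= eqxx E2 /= in h2.
        by move/eqP: h1 ->; move/eqP: h2 ->.
      * by have := Hl' (inl (x, 0)); rewrite E2 /= eqxx.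
    have Hpsi x y : psi x y = y + f (pi x + a0) - f (x + a0).
      have := Hfl (inl (a0, f (x + a0) - y)) (eqxx a0) (inl (x, y)).
      rewrite Hg /=.
      have -> : f (x + a0) - (f (x + a0) - y) = y by ring.
      rewrite eqxx => /eqP ->; ring.
    have Hkey a x : star (x - pi x) (a - a0) = star (- pi 0) (a - a0).
      have [b' Hb] := line_img g a 0 a Hc Haff (Hfix _).
      have E z : f (z + a) + f (pi z + a0) - f (z + a0) = f (pi z + a) - b'.
        have := Hb z (f (z + a) - 0); rewrite Hg /= eqxx Hpsi subr0 => /eqP ->.
        by [].
      apply: (mulfI H2); apply/eqP; rewrite -subr_eq0; apply/eqP.
      have -> : 2 * star (x - pi x) (a - a0) - 2 * star (- pi 0) (a - a0) =
        (f (x + a) + f (pi x + a0) - f (x + a0) - (f (pi x + a) - b'))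
        - (f (0 + a) + f (pi 0 + a0) - f (0 + a0) - (f (pi 0 + a) - b')).
        rewrite !fD !starDl !starDr !starNl !starNr !star0l; ring.
      by rewrite (E x) (E 0) !subrr.
    have Hpi x : pi x = x + pi 0.
      have : x - pi x - - pi 0 = 0.
        apply: nondeg => z; rewrite starC starDl starNl.
        by have := Hkey (z + a0) x; rewrite addrK => ->; rewrite subrr.
      move=> e; apply/eqP; rewrite -subr_eq0.
      have -> : pi x - (x + pi 0) = - (x - pi x - - pi 0) by ring.
      by rewrite e oppr0.
    apply/existsP; exists (pi 0); apply/existsP;
      exists (- (f (pi 0) + 2 * star a0 (pi 0))); apply/is_sigmaP.
    case => [[x y]|[a|]] /=.
    * rewrite Hg Hpsi (Hpi x); congr (inl (_, _)).
      have -> : x + pi 0 + a0 = (x + a0) + pi 0 by ring.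
      rewrite fD starDl (starC (pi 0) x); ring.
    * by rewrite Hfix addrK.
    * exact: Hfix.
  +
    pose psi x y := if g (inl (x, y)) is inl (_, y') then y' else 0.
    have Hg x y : g (inl (x, y)) = inl (x, psi x y).
      have := Hfl (N_ x) erefl (inl (x, y)); rewrite /psi /= eqxx.
      case E: (g (inl (x, y))) => [[x' y']|s] //=; first by move/eqP ->.
      by move=> _; move: E; rewrite -Hfix => /perm_inj.
    pose t x y := psi x y - y.
    have Htp x1 y1 x2 y2 : x1 != x2 -> t x1 y1 = t x2 y2.
      move=> hx; have [a [b [e1 e2]]] := two_point x1 y1 x2 y2 hx.
      have [b' Hb] := line_img g a b a Hc Haff (Hfix _).
      have h1 := Hb x1 y1; have h2 := Hb x2 y2.
      rewrite Hg /= -e1 eqxx in h1; rewrite Hg /= -e2 eqxx in h2.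
      move/eqP: h1 => h1; move/eqP: h2 => h2.
      rewrite /t h1 h2 e1 e2; ring.
    have Ht x y : t x y = t 0 0.
      case: (eqVneq x 0) => [->|hx]; last exact: Htp.
      rewrite (Htp 0 y 1 0) ?(Htp 1 0 0 0) // ?oner_neq0 //.
      by rewrite eq_sym oner_neq0.
    apply/existsP; exists 0; apply/existsP; exists (- t 0 0); apply/is_sigmaP.
    case => [[x y]|[a|]] /=.
    * rewrite Hg star0l mulr0 addr0 opprK addr0 -(Ht x y) /t.
      congr (inl (_, _)); ring.
    * by rewrite Hfix addr0 subr0.
    * exact: Hfix.
- case/existsP => u /existsP [v /is_sigmaP H].
  have Hfx s : g (inr s) = inr s by case: s => [a|]; rewrite H //= addrK.
  have Hc := coll_sigma _ _ _ _ H.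
  case: (eqVneq u 0) => [u0|un0].
  + apply/existsP; exists (P_inf F); apply/and4P; split => //.
    * by apply/forallP => -[[x y]|s] //=; rewrite Hfx.
    * apply/forallP => -[[a b]|[a|]] //=; apply/forallP => P; rewrite H u0;
        case: P => [[x y]|[c|]] //=; by rewrite addr0.
  + have [a0 ha0] := @surj u (- (f u + v) / 2) un0.
    have h2 : 2 * star a0 u = - (f u + v) by rewrite ha0 mulrC divfK.
    apply/existsP; exists (inr (Some a0)); apply/and4P; split => //.
    * by apply/forallP => -[[x y]|s] //=; rewrite Hfx.
    * apply/forallP => -[[a b]|[a|]] //=.
      - apply/implyP => /eqP <-; apply/forallP => P; rewrite H.
        case: P => [[x y]|[c|]] //=; last by rewrite addrK.
        have -> : x + u + a0 = (x + a0) + u by ring.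
        rewrite fD starDl mulrDr h2.
        have -> : f (x + a0) + f u + (2 * star x u + - (f u + v)) - b =
          (f (x + a0) - b) + (2 * star x u - v) by ring.
        by rewrite -addrA (starC u x) (inj_eq (addIr _)).
      - apply/forallP => P; rewrite H; by case: P => [[x y]|[c|]].
Qed.

End Geo.

Theorem lemma4p3 (F : finFieldType) (p k : nat) (f : F -> F) :
  prime p -> odd p -> p \in [pchar F] -> (0 < k)%N -> #|F| = ((p ^ k) ^ 2)%N ->
  DO_poly p f -> planar f ->
  let Sigma := [set g : {perm point F} |
                 [exists u : F, exists v : F, exists w : F, is_sigma f g u v w]] in
  [/\ (* (a) *)
      [/\ forall u v w : F, exists g : {perm point F}, is_sigma f g u v w,
          group_set Sigma,
          {in Sigma, forall g, collineation f g},
          #|Sigma| = ((p ^ k) ^ 6)%N &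
          forall (u v w u' v' w' : F) (P : point F),
            sigma f u' v' w' (sigma f u v w P)
            = sigma f (u + u') (v + v' - 2 * star f w' u) (w + w') P],
      (* (b) *)
      shift_group f = [set g | [exists u : F, exists v : F, is_sigma f g u v 0]],
      (* (c) *)
      translation_group f = [set g | [exists u : F, exists v : F, is_sigma f g u v u]] &
      (* (d) *)
      elation_group f (N_ 0) (P_inf F) = [set g | [exists w : F, is_sigma f g 0 0 w]]].
Proof.
move=> _ Hodd Hpc _ HF HDO Hpl Sigma.
have H2 := @two_neq0 _ _ Hpc Hodd.
have Hf0 := @f0 _ _ _ Hpc HDO.
have Hq := @f_quad _ _ _ Hpc HDO.
split; last 3 first.
- exact: (@partB _ _ H2 Hf0 Hq Hpl).
- exact: (@partC _ _ H2 Hf0 Hq Hpl).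
- exact: (@partD _ _ H2 Hf0 Hq Hpl).
split.
- by move=> u v w; exists (@mkS _ f Hf0 Hq u v w); apply: (@mkS_is _ f Hf0 Hq).
- apply/group_setP; split.
    rewrite inE; apply/existsP; exists 0; apply/existsP; exists 0; apply/existsP; exists 0.
    by apply/is_sigmaP => P; rewrite perm1 (@sigma_id _ _ Hf0).
  move=> g h; rewrite !inE.
  case/existsP => u /existsP [v /existsP [w /is_sigmaP Hg]].
  case/existsP => u' /existsP [v' /existsP [w' /is_sigmaP Hh]].
  apply/existsP; exists (u + u'); apply/existsP; exists (v + v' - 2 * star f w' u).
  apply/existsP; exists (w + w'); apply/is_sigmaP => P.
  by rewrite permM Hg Hh (@sigma_comp _ _ Hq).
- move=> g; rewrite inE.
  case/existsP => u /existsP [v /existsP [w /is_sigmaP Hg]].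
  exact: (@coll_sigma _ _ H2 Hq _ _ _ _ Hg).
- pose mk (t : F * F * F) := @mkS _ f Hf0 Hq t.1.1 t.1.2 t.2.
  have -> : Sigma = mk @: [set: F * F * F].
    apply/setP => g; rewrite inE; apply/idP/imsetP.
      case/existsP => u /existsP [v /existsP [w Hg]].
      exists (u, v, w); first by rewrite inE.
      exact: (@is_sigma_mkS _ _ Hf0 Hq _ _ _ _ Hg).
    case=> t _ ->; apply/existsP; exists t.1.1; apply/existsP; exists t.1.2.
    by apply/existsP; exists t.2; apply: (@mkS_is _ f Hf0 Hq).
  rewrite card_imset; last first.
    move=> [[u1 v1] w1] [[u2 v2] w2] /permP E.
    have := E (inl (0, 0)); rewrite !(@mkSE _ _ Hf0 Hq) /= !(@star0r _ _ Hf0) mulr0 !add0r.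
    case=> eu ev.
    have := E (inr (Some 0)); rewrite !(@mkSE _ _ Hf0 Hq) /= !add0r; case=> ew.
    rewrite eu in ew *; congr (_, _, _).
      exact: oppr_inj ev.
    by apply: (addIr (- u2)).
  rewrite cardsT !card_prod HF.
  by rewrite -!expnD.
- exact: (@sigma_comp _ _ Hq).
Qed.
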